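(* Let $F$ be a field and $R$ a von Neumann regular ring which is an $F$-algebra. Let $M$ be a right $R$-module with $\dim_F M\le\aleph_0$ and let $I=\mathrm{Ann}_R(M)$. The following are equivalent: (1) $R/I$ is Artinian; (2) $M$ is $\Sigma$-$\aleph_0$-injective; (3) $M$ is $\aleph_0$-injective.
   Context: A right $R$-module $N$ is $\aleph_0$-injective if every $R$-homomorphism from a countably generated right ideal of $R$ into $N$ extends to $R$. $M$ is $\Sigma$-$\aleph_0$-injective if the direct sum $M^{(\Lambda)}$ of $\Lambda$ copies of $M$ is $\aleph_0$-injective for every index set $\Lambda$. $\mathrm{Ann}_R(M)=\{r\in R: Mr=0\}$; $M$ is an $F$-vector space via the algebra structure. *)

(* Defs.v *)
From HB Require Import structures.
From mathcomp Require Import all_boot all_order all_algebra.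
From Stdlib Require List.
Set Implicit Arguments.
Unset Strict Implicit.
Unset Printing Implicit Defensive.
Import Order.TTheory GRing.Theory.
Local Open Scope ring_scope.

Definition von_neumann_regular (R : nzRingType) : Prop :=
  forall a : R, exists x : R, a = a * x * a.

Definition right_ideal (R : nzRingType) (J : R -> Prop) : Prop :=
  [/\ J 0,
      (forall a b, J a -> J b -> J (a + b)),
      (forall a, J a -> J (- a)) &
      (forall a r, J a -> J (a * r))].

(* J is a countably generated right ideal: there is a countable family
   gen : nat -> R (repetitions / zeros allowed, so finitely generated
   ideals are included) such that J is exactly the set of finite sums
   sum_i gen_i r_i. *)
Definition cg_right_ideal (R : nzRingType) (J : R -> Prop) : Prop :=
  exists gen : nat -> R, forall x : R,
    J x <-> exists (n : nat) (r : nat -> R), x = \sum_(i < n) gen i * r i.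

Definition two_sided_ideal (R : nzRingType) (I : R -> Prop) : Prop :=
  right_ideal I /\ (forall a r, I a -> I (r * a)).

(* (Right) Artinian-ness of the quotient ring R/I, for a two-sided ideal I,
   expressed through the lattice of right ideals of R/I, which (correspondence
   theorem) is the lattice of right ideals of R containing I:
   every descending chain of right ideals of R/I stabilises. *)
Definition quotient_artinian (R : nzRingType) (I : R -> Prop) : Prop :=
  forall J : nat -> (R -> Prop),
    (forall n, right_ideal (J n)) ->
    (forall n x, I x -> J n x) ->
    (forall n x, J n.+1 x -> J n x) ->
    exists n, forall m, (n <= m)%N -> forall x, J m x <-> J n x.

Definition right_module (R : nzRingType) (M : zmodType) (act : M -> R -> M)
  : Prop :=
  [/\ (forall m n r, act (m + n) r = act m r + act n r),
      (forall m r s, act m (r + s) = act m r + act m s),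
      (forall m r s, act m (r * s) = act (act m r) s) &
      (forall m, act m 1 = m)].

Definition ann (R : nzRingType) (M : zmodType) (act : M -> R -> M) : R -> Prop :=
  fun r => forall m : M, act m r = 0.

(* F-vector space structure on M via the F-algebra structure of R:
   k . m := m (k 1_R). *)
Definition fscale (F : fieldType) (R : algType F) (M : zmodType)
  (act : M -> R -> M) (k : F) (m : M) : M := act m (k%:A).

(* dim_F M <= aleph_0 : M has an F-basis B (linearly independent and
   spanning, w.r.t. fscale) which is countable. *)
Definition countable_dim (F : fieldType) (R : algType F) (M : zmodType)
  (act : M -> R -> M) : Prop :=
  exists B : M -> Prop,
    [/\ (exists e : nat -> M, forall b, B b -> exists n, e n = b),
        (forall (s : seq M) (c : M -> F),
            uniq s -> (forall b, b \in s -> B b) ->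
            \sum_(b <- s) fscale act (c b) b = 0 ->
            forall b, b \in s -> c b = 0) &
        (forall m : M, exists (s : seq M) (c : M -> F),
            (forall b, b \in s -> B b) /\
            m = \sum_(b <- s) fscale act (c b) b)].

(* A right R-module presented by a carrier N, an addition, a right action,
   and a predicate S carving out the actual module inside N (used for
   direct sums, which live inside the full product).  f : R -> N is an
   R-homomorphism from the right ideal J into the module. *)
Definition hom_on (R : nzRingType) (N : Type) (addN : N -> N -> N)
  (actN : N -> R -> N) (S : N -> Prop) (J : R -> Prop) (f : R -> N) : Prop :=
  [/\ (forall a, J a -> S (f a)),
      (forall a b, J a -> J b -> f (a + b) = addN (f a) (f b)) &
      (forall a r, J a -> f (a * r) = actN (f a) r)].

Definition aleph0_injective_gen (R : nzRingType) (N : Type)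
  (addN : N -> N -> N) (actN : N -> R -> N) (S : N -> Prop) : Prop :=
  forall (J : R -> Prop) (f : R -> N),
    cg_right_ideal J -> hom_on addN actN S J f ->
    exists g : R -> N, hom_on addN actN S (fun _ => True) g /\
                       (forall a, J a -> g a = f a).

Definition aleph0_injective (R : nzRingType) (M : zmodType)
  (act : M -> R -> M) : Prop :=
  aleph0_injective_gen (fun x y : M => x + y) act (fun _ => True).

(* The direct sum M^(L) of L copies of M: finitely supported functions
   L -> M, with pointwise addition and action. *)
Definition fin_supp (L : Type) (M : zmodType) (f : L -> M) : Prop :=
  exists s : list L, forall l, f l <> 0 -> List.In l s.

Definition dsum_aleph0_injective (R : nzRingType) (M : zmodType)
  (act : M -> R -> M) (L : Type) : Prop :=
  aleph0_injective_gen (fun x y : L -> M => fun l => x l + y l)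
                       (fun (x : L -> M) (r : R) => fun l => act (x l) r)
                       (@fin_supp L M).

Definition sigma_aleph0_injective (R : nzRingType) (M : zmodType)
  (act : M -> R -> M) : Prop :=
  forall L : Type, dsum_aleph0_injective act L.

(* Main.v *)
Require Import Defs.
From HB Require Import structures.
From mathcomp Require Import all_boot all_order all_algebra.
From Stdlib Require Import ClassicalEpsilon Classical FunctionalExtensionality.
From mathcomp Require Import zify.
Set Implicit Arguments.
Unset Strict Implicit.
Unset Printing Implicit Defensive.
Import GRing.Theory.
Local Open Scope ring_scope.

Section Basics.
Variables (F : fieldType) (R : algType F) (M : zmodType) (act : M -> R -> M).
Hypothesis Hmod : right_module act.

Lemma actDl m n r : act (m + n) r = act m r + act n r.
Proof. by case: Hmod. Qed.
Lemma actDr m r s : act m (r + s) = act m r + act m s.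
Proof. by case: Hmod. Qed.
Lemma actM m r s : act m (r * s) = act (act m r) s.
Proof. by case: Hmod. Qed.
Lemma act1 m : act m 1 = m.
Proof. by case: Hmod. Qed.
Lemma act0l r : act 0 r = 0.
Proof. by apply: (addrI (act 0 r)); rewrite -actDl !addr0. Qed.
Lemma act0r m : act m 0 = 0.
Proof. by apply: (addrI (act m 0)); rewrite -actDr !addr0. Qed.
Lemma actNl m r : act (- m) r = - act m r.
Proof. by apply/eqP; rewrite -addr_eq0 -actDl addNr act0l. Qed.
Lemma actNr m r : act m (- r) = - act m r.
Proof. by apply/eqP; rewrite -addr_eq0 -actDr addNr act0r. Qed.
Lemma actBr m r s : act m (r - s) = act m r - act m s.
Proof. by rewrite actDr actNr. Qed.
Lemma actBl m n r : act (m - n) r = act m r - act n r.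
Proof. by rewrite actDl actNl. Qed.
Lemma act_suml (I : Type) (s : seq I) (P : pred I) (G : I -> M) r :
  act (\sum_(i <- s | P i) G i) r = \sum_(i <- s | P i) act (G i) r.
Proof. exact: (big_morph (fun x => act x r) (fun x y => actDl x y r) (act0l r)). Qed.
Lemma act_sumr (I : Type) (s : seq I) (P : pred I) (G : I -> R) m :
  act m (\sum_(i <- s | P i) G i) = \sum_(i <- s | P i) act m (G i).
Proof. exact: (big_morph (act m) (actDr m) (act0r m)). Qed.

Definition II := ann act.
Lemma I0 : II 0. Proof. by move=> m; rewrite act0r. Qed.
Lemma ID a b : II a -> II b -> II (a + b).
Proof. by move=> Ha Hb m; rewrite actDr Ha Hb addr0. Qed.
Lemma IN a : II a -> II (- a).
Proof. by move=> Ha m; rewrite actNr Ha oppr0. Qed.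
Lemma IB a b : II a -> II b -> II (a - b).
Proof. by move=> Ha Hb; apply: ID => //; apply: IN. Qed.
Lemma IMl r a : II a -> II (r * a).
Proof. by move=> Ha m; rewrite actM Ha. Qed.
Lemma IMr r a : II a -> II (a * r).
Proof. by move=> Ha m; rewrite actM Ha act0l. Qed.

Definition cong (x y : R) := II (x - y).
Lemma cong_refl x : cong x x. Proof. by rewrite /cong subrr; apply: I0. Qed.
Lemma cong_sym x y : cong x y -> cong y x.
Proof. by rewrite /cong => H; rewrite -opprB; apply: IN. Qed.
Lemma cong_trans x y z : cong x y -> cong y z -> cong x z.
Proof. by rewrite /cong => H1 H2; have := ID H1 H2; rewrite addrA subrK. Qed.
Lemma cong_add x y x' y' : cong x x' -> cong y y' -> cong (x + y) (x' + y').
Proof. by rewrite /cong => H1 H2; rewrite opprD addrACA; apply: ID. Qed.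
Lemma cong_opp x x' : cong x x' -> cong (- x) (- x').
Proof. by rewrite /cong => H; rewrite -opprD; apply: IN. Qed.
Lemma cong_sub x y x' y' : cong x x' -> cong y y' -> cong (x - y) (x' - y').
Proof. by move=> H1 H2; apply: cong_add => //; apply: cong_opp. Qed.
Lemma cong_mull r x y : cong x y -> cong (r * x) (r * y).
Proof. by rewrite /cong -mulrBr; apply: IMl. Qed.
Lemma cong_mulr r x y : cong x y -> cong (x * r) (y * r).
Proof. by rewrite /cong -mulrBl; apply: IMr. Qed.
Lemma cong_I x : II x -> cong x 0.
Proof. by rewrite /cong subr0. Qed.
Lemma cong_I' x : cong x 0 -> II x.
Proof. by rewrite /cong subr0. Qed.

End Basics.

Section Chain.
Variables (F : fieldType) (R : algType F) (M : zmodType) (act : M -> R -> M).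
Hypothesis Hmod : right_module act.
Hypothesis Hreg : von_neumann_regular R.
Local Notation II := (II act).
Local Notation cong := (cong act).

Definition principal (J : R -> Prop) := exists e, J e /\ forall a, J a -> II (a - e * a).

Definition schain (D : nat -> R -> Prop) :=
  [/\ (forall n, right_ideal (D n)), (forall n x, II x -> D n x),
      (forall n x, D n.+1 x -> D n x) & (forall n, exists x, D n x /\ ~ D n.+1 x)].

Lemma ri0 (J : R -> Prop) : right_ideal J -> J 0. Proof. by case. Qed.
Lemma riD (J : R -> Prop) a b : right_ideal J -> J a -> J b -> J (a + b). Proof. by case=> _ H _ _; apply: H. Qed.
Lemma riN (J : R -> Prop) a : right_ideal J -> J a -> J (- a). Proof. by case=> _ _ H _; apply: H. Qed.
Lemma riB (J : R -> Prop) a b : right_ideal J -> J a -> J b -> J (a - b).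
Proof. by move=> H Ha Hb; apply: riD => //; apply: riN. Qed.
Lemma riM (J : R -> Prop) a r : right_ideal J -> J a -> J (a * r). Proof. by case=> _ _ _ H; apply: H. Qed.

Lemma cid_fun (A B : Type) (P : A -> B -> Prop) (b0 : B) :
  (forall a, exists b, P a b) -> exists f : A -> B, forall a, P a (f a).
Proof.
move=> H; exists (fun a => proj1_sig (constructive_indefinite_description _ (H a))).
by move=> a; case: (constructive_indefinite_description _ (H a)).
Qed.

Lemma step_exists (J : R -> Prop) : right_ideal J -> ~ principal J ->
  forall e, J e -> e * e = e ->
  exists h, [/\ J h, h * h = h, e * h = 0, h * e = 0 & ~ II h].
Proof.
move=> HJ Hnp e Je Hee.
have [a [Ja Hna]] : exists a, J a /\ ~ II (a - e * a).
  apply: NNPP => Hc; apply: Hnp; exists e; split => // a Ja.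
  by apply: NNPP => Hn; apply: Hc; exists a.
set b := a - e * a.
have Jb : J b by apply: riB => //; apply: riM.
have eb : e * b = 0 by rewrite /b mulrBr mulrA Hee subrr.
have [y Hy] := Hreg b.
set f := b * y.
have fb : f * b = b by rewrite /f -Hy.
have ff : f * f = f by rewrite /f mulrA -Hy.
have Jf : J f by apply: riM.
have ef : e * f = 0 by rewrite /f mulrA eb mul0r.
have nIf : ~ II f by move=> If; apply: Hna; rewrite -/b -fb; apply: IMr.
exists (f * (1 - e)); split.
- by apply: riM.
- by rewrite mulrA -[f * (1 - e) * f]mulrA mulrBl mul1r ef subr0 ff.
- by rewrite mulrA ef mul0r.
- by rewrite -mulrA mulrBl mul1r Hee subrr mulr0.
- move=> Ih; apply: nIf.
  have -> : f = f * (1 - e) * f by rewrite -mulrA mulrBl mul1r ef subr0 ff.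
  by apply: IMr.
Qed.

Lemma chain_of_nonprincipal (J : R -> Prop) : right_ideal J -> ~ principal J ->
  exists D, schain D /\ forall n, principal (D n).
Proof.
move=> HJ Hnp.
have [h Hh] : exists h : R -> R, forall e, J e -> e * e = e ->
   [/\ J (h e), h e * h e = h e, e * h e = 0, h e * e = 0 & ~ II (h e)].
  apply: (@cid_fun _ _ (fun e he => J e -> e * e = e ->
   [/\ J he, he * he = he, e * he = 0, he * e = 0 & ~ II he]) 0) => e.
  case: (classic (J e /\ e * e = e)) => [[Je Hee]|Hn].
    by have [x Hx] := step_exists HJ Hnp Je Hee; exists x.
  by exists 0 => Je Hee; case: Hn.
pose E := fix E n := if n is n'.+1 then E n' + h (E n') else 0.
have Hinv : forall n, J (E n) /\ E n * E n = E n.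
  elim=> [|n [Je Hee]] /=; first by split; [apply: ri0 | rewrite mulr0].
  have [Jh hh eh he _] := Hh _ Je Hee.
  split; first by apply: riD.
  by rewrite mulrDl !mulrDr Hee hh eh he addr0 add0r.
have ES : forall n, E n * E n.+1 = E n.
  by move=> n /=; case: (Hinv n) => Je Hee; case: (Hh _ Je Hee) => _ _ eh _ _; rewrite mulrDr Hee eh addr0.
pose D n x := exists r i, II i /\ x = (1 - E n) * r + i.
exists D; split; first split.
- move=> n; split.
  + by exists 0, 0; split; [apply: I0 | rewrite mulr0 addr0].
  + move=> a b [r [i [Ii ->]]] [r' [i' [Ii' ->]]]; exists (r + r'), (i + i'); split.
      by apply: ID.
    by rewrite mulrDr addrACA.
  + move=> a [r [i [Ii ->]]]; exists (- r), (- i); split; first by apply: IN.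
    by rewrite opprD mulrN.
  + move=> a s [r [i [Ii ->]]]; exists (r * s), (i * s); split; first by apply: IMr.
    by rewrite mulrDl mulrA.
- by move=> n x Ix; exists 0, x; rewrite mulr0 add0r.
- move=> n x [r [i [Ii ->]]]; exists ((1 - E n.+1) * r), i; split => //.
  congr (_ + _); rewrite mulrA; congr (_ * _).
  by rewrite mulrBl mul1r mulrBr mulr1 ES subrr subr0.
- move=> n; exists (1 - E n); split; first by exists 1, 0; split; [apply: I0 | rewrite mulr1 addr0].
  move=> [r [i [Ii Heq]]].
  case: (Hinv n) => Je Hee; case: (Hh _ Je Hee) => _ hh eh he nIh.
  apply: nIh.
  have H1 : E n.+1 * ((1 - E n.+1) * r + i) = E n.+1 * i.
    by rewrite mulrDr mulrA mulrBr mulr1 (proj2 (Hinv n.+1)) subrr mul0r add0r.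
  have H2 : E n.+1 * (1 - E n) = h (E n).
    by rewrite /= mulrBr mulr1 mulrDl Hee he addr0 addrC addKr.
  by rewrite -H2 Heq H1; apply: IMl.
- move=> n; exists (1 - E n); split; first by exists 1, 0; split; [apply: I0 | rewrite mulr1 addr0].
  move=> a [r [i [Ii ->]]].
  have -> : (1 - E n) * r + i - (1 - E n) * ((1 - E n) * r + i) = E n * i.
    have Hid : (1 - E n) * (1 - E n) = 1 - E n.
      by rewrite mulrBl mul1r mulrBr mulr1 (proj2 (Hinv n)) subrr subr0.
    rewrite mulrDr mulrA Hid opprD addrACA subrr add0r.
    by rewrite mulrBl mul1r opprB addrC subrK.
  by apply: IMl.
Qed.

End Chain.

Section Family.
Variables (F : fieldType) (R : algType F) (M : zmodType) (act : M -> R -> M).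
Hypothesis Hmod : right_module act.
Local Notation II := (II act).
Local Notation cong := (cong act).
Local Notation c_trans := (cong_trans Hmod).
Local Notation c_sym := (cong_sym Hmod).
Local Notation c_refl := (cong_refl Hmod).
Local Notation c_sub := (cong_sub Hmod).
Local Notation c_mull := (cong_mull Hmod).
Local Notation c_mulr := (cong_mulr Hmod).
Local Notation c_I' := (@cong_I' F R M act _).

Lemma expand4 (x y z w : R) : (x - y) * (z - w) = (x * z - x * w) - (y * z - y * w).
Proof. by rewrite mulrBl !mulrBr. Qed.

Lemma family_of_chain (D : nat -> R -> Prop) : schain act D -> (forall n, principal act (D n)) ->
  exists k : nat -> R, [/\ (forall n, ~ II (k n)),
    (forall a b, a <> b -> II (k a * k b)) & (forall a, cong (k a * k a) (k a))].
Proof.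
case=> Dri DI Ddesc Dstr Dpr.
have [gp Hgp] := @cid_fun _ _ (fun n e => D n e /\ forall a, D n a -> II (a - e * a)) 0 Dpr.
pose g := fix g n := if n is n'.+1 then gp n * g n' else gp 0.
have Hinv : forall n, D n (g n) /\ forall a, D n a -> cong a (g n * a).
  elim=> [|n [Dg Hg]] /=; first by case: (Hgp 0).
  case: (Hgp n.+1) => Dp Hp; split; first by apply: riM.
  move=> a Da; rewrite -mulrA; apply: (c_trans (y := gp n.+1 * a)); first by apply: Hp.
  by apply: c_mull; apply: Hg; apply: Ddesc.
have desc_le : forall n m x, (n <= m)%N -> D m x -> D n x.
  move=> n m x /subnKC <-; elim: (m - n)%N => [|d IH]; first by rewrite addn0.
  by rewrite addnS => H; apply: IH; apply: Ddesc.
have G1 : forall n m, (n <= m)%N -> cong (g m * g n) (g m).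
  move=> n m /subnKC <-; elim: (m - n)%N => [|d IH].
    by rewrite addn0; apply: c_sym; apply: (proj2 (Hinv n)); apply: (proj1 (Hinv n)).
  by rewrite addnS /= -mulrA; apply: c_mull.
have G2 : forall n m, (n <= m)%N -> cong (g n * g m) (g m).
  move=> n m Hnm; apply: c_sym; apply: (proj2 (Hinv n)).
  by apply: (desc_le n m) => //; apply: (proj1 (Hinv m)).
exists (fun n => g n - g n.+1); split.
- move=> n Ik; case: (Dstr n) => x [Dx nDx]; apply: nDx.
  have c1 : cong x (g n.+1 * x).
    apply: (c_trans (proj2 (Hinv n) x Dx)); apply: c_mulr; exact: Ik.
  have -> : x = g n.+1 * x + (x - g n.+1 * x) by rewrite addrC subrK.
  apply: (riD (Dri n.+1)); first by apply: (riM _ (Dri n.+1)); apply: (proj1 (Hinv n.+1)).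
  by apply: DI; exact: c1.
- move=> a b Hab; apply: c_I'; rewrite expand4.
  case: (ltngtP a b) => [lt|gt|eq]; last by [].
  + apply: (c_trans (y := (g b - g b.+1) - (g b - g b.+1))); last by rewrite subrr; apply: c_refl.
    apply: c_sub; apply: c_sub; apply: G2; by [apply: ltnW | apply: leqW; apply: ltnW | | apply: ltnW].
  + apply: (c_trans (y := (g a - g a) - (g a.+1 - g a.+1))); last by rewrite !subrr; apply: c_refl.
    apply: c_sub; apply: c_sub; apply: G1; by [apply: ltnW | | apply: leqW; apply: ltnW | apply: ltnW].
- move=> a; rewrite expand4.
  apply: (c_trans (y := (g a - g a.+1) - (g a.+1 - g a.+1))); last by rewrite subrr subr0; apply: c_refl.
  apply: c_sub; apply: c_sub; [apply: G1 | apply: G2 | apply: G1 | apply: G1]; by [].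
Qed.

End Family.

Section Lin.
Variables (F : fieldType) (R : algType F) (M : zmodType) (act : M -> R -> M).
Hypothesis Hmod : right_module act.
Local Notation fs := (fscale act).

Lemma fsDr c m n : fs c (m + n) = fs c m + fs c n.
Proof. by rewrite /fscale actDl. Qed.
Lemma fsDl c d m : fs (c + d) m = fs c m + fs d m.
Proof. by rewrite /fscale scalerDl actDr. Qed.
Lemma fs0 m : fs 0 m = 0.
Proof. by rewrite /fscale scale0r act0r. Qed.
Lemma fs0r c : fs c 0 = 0.
Proof. by rewrite /fscale act0l. Qed.
Lemma fs1 m : fs 1 m = m.
Proof. by rewrite /fscale scale1r act1. Qed.
Lemma fsfs c d m : fs c (fs d m) = fs (c * d) m.
Proof.
have E : d%:A * c%:A = (c * d)%:A :> R by rewrite mulr_algl scalerA mulrC.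
by rewrite /fscale -actM //; exact: (congr1 (act m) E).
Qed.
Lemma fs_comm c m r : act (fs c m) r = fs c (act m r).
Proof.
have E : c%:A * r = r * c%:A :> R by rewrite mulr_algl mulr_algr.
by rewrite /fscale -!actM //; exact: (congr1 (act m) E).
Qed.
Lemma fs_sum_scal (I : Type) (s : seq I) (P : pred I) (c : I -> F) m :
  fs (\sum_(i <- s | P i) c i) m = \sum_(i <- s | P i) fs (c i) m.
Proof. exact: (big_morph (fun x => fs x m) (fun x y => fsDl x y m) (fs0 m)). Qed.
Lemma fs_sum_vec (I : Type) (s : seq I) (P : pred I) (G : I -> M) c :
  fs c (\sum_(i <- s | P i) G i) = \sum_(i <- s | P i) fs c (G i).
Proof. by rewrite /fscale act_suml. Qed.
Lemma fs_cancel c m : c != 0 -> fs c m = 0 -> m = 0.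
Proof.
move=> Hc H; have : fs c^-1 (fs c m) = m by rewrite fsfs mulVf // fs1.
by rewrite H fs0r.
Qed.

Definition Dsp (e : nat -> M) N m := exists c : nat -> F, m = \sum_(t < N) fs (c t) (e t).

Lemma Dsp_S e N m : Dsp e N m -> Dsp e N.+1 m.
Proof.
case=> c ->; exists (fun t => if (t < N)%N then c t else 0).
rewrite big_ord_recr /= ltnn fs0 addr0; apply: eq_bigr => i _; by rewrite ltn_ord.
Qed.
Lemma Dsp_le e N N' m : (N <= N')%N -> Dsp e N m -> Dsp e N' m.
Proof.
move/subnKC <-; elim: (N' - N)%N => [|d IH]; first by rewrite addn0.
by rewrite addnS => H; apply: Dsp_S; apply: IH.
Qed.
Lemma Dsp_add e N m n : Dsp e N m -> Dsp e N n -> Dsp e N (m + n).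
Proof.
case=> c -> [d ->]; exists (fun t => c t + d t); rewrite -big_split /=.
by apply: eq_bigr => i _; rewrite fsDl.
Qed.
Lemma Dsp_scale e N a m : Dsp e N m -> Dsp e N (fs a m).
Proof.
case=> c ->; exists (fun t => a * c t); rewrite fs_sum_vec.
by apply: eq_bigr => i _; rewrite fsfs.
Qed.
Lemma Dsp_e e n : Dsp e n.+1 (e n).
Proof.
exists (fun t => if t == n then 1 else 0); rewrite big_ord_recr /= eqxx fs1 big1 ?add0r //.
by move=> i _; rewrite (ltn_eqF (ltn_ord i)) fs0.
Qed.
Lemma Dsp_0 e : Dsp e 0 0.
Proof. by exists (fun _ => 0); rewrite big_ord0. Qed.

Lemma span_all : countable_dim act -> exists e, forall m, exists N, Dsp e N m.
Proof.
case=> B [[e He] _ Hsp]; exists e => m.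
have [s [c [Hs ->]]] := Hsp m.
elim: s Hs => [|b s IH] Hs; first by exists 0%N; rewrite big_nil; apply: Dsp_0.
have [N HN] := IH (fun x hx => Hs x (mem_behead (s:=b :: s) hx)).
have [n Hn] := He b (Hs b (mem_head _ _)).
exists (maxn N n.+1); rewrite big_cons; apply: Dsp_add.
  by apply: (Dsp_le (leq_maxr _ _)); rewrite -Hn; apply: Dsp_scale; apply: Dsp_e.
by apply: (Dsp_le (leq_maxl _ _)).
Qed.

Lemma dependence e N (v : nat -> M) : (forall j, (j <= N)%N -> Dsp e N (v j)) ->
  exists a : 'I_N.+1 -> F, (exists j, a j != 0) /\ \sum_(j < N.+1) fs (a j) (v j) = 0.
Proof.
move=> Hv.
have [cc Hcc] : exists cc : nat -> nat -> F, forall j, (j <= N)%N ->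
    v j = \sum_(t < N) fs (cc j t) (e t).
  apply: (@cid_fun nat (nat -> F) (fun j c => (j <= N)%N -> v j = \sum_(t < N) fs (c t) (e t)) (fun _ => 0)) => j.
  case: (boolP (j <= N)%N) => H; last by exists (fun _ => 0).
  by have [c Hc] := Hv j H; exists c.
pose A := \matrix_(j < N.+1, t < N) cc j t.
have HK : kermx A != 0.
  apply/eqP => HK; have := mxrank_ker A; rewrite HK mxrank0 => /esym /eqP.
  by rewrite subn_eq0 leqNgt ltnS rank_leq_col.
have [i Hi] : exists i, row i (kermx A) != 0.
  apply: NNPP => Hn; move/eqP: HK; apply; apply/row_matrixP => i; rewrite row0.
  by apply/eqP; apply: NNPP => Hi; apply: Hn; exists i; apply/negP.
set w := row i (kermx A).
have Hw : w *m A = 0 by rewrite /w -row_mul mulmx_ker row0.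
exists (fun j => w 0 j); split.
  apply: NNPP => Hn; move/eqP: Hi; apply; apply/rowP => j; rewrite -/w [RHS]mxE.
  by apply: NNPP => H; apply: Hn; exists j; apply/eqP.
transitivity (\sum_(t < N) fs ((w *m A) 0 t) (e t)); last first.
  by rewrite Hw; apply: big1 => t _; rewrite mxE fs0.
rewrite (eq_bigr (fun j => \sum_(t < N) fs (w 0 j * cc j t) (e t))); last first.
  move=> j _; rewrite Hcc; last by rewrite -ltnS ltn_ord.
  by rewrite fs_sum_vec; apply: eq_bigr => t _; rewrite fsfs.
rewrite exchange_big /=; apply: eq_bigr => t _; rewrite mxE fs_sum_scal.
by apply: eq_bigr => j _; rewrite [A _ _]mxE.
Qed.

End Lin.

Lemma sq_uniq a b N N' : (a <= N)%N -> (b <= N')%N -> (N * N + a = N' * N' + b)%N -> N = N'.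
Proof. move=> *; nia. Qed.
Lemma sq_lt N l : (N < (N * N + l).+1)%N.
Proof. nia. Qed.

Lemma sum_pad (V : zmodType) (G : nat -> V) n N : (n <= N)%N -> (forall i, (n <= i)%N -> G i = 0) ->
  \sum_(i < N) G i = \sum_(i < n) G i.
Proof.
move=> /subnKC <- HG; elim: (N - n)%N => [|d IH]; first by rewrite addn0.
by rewrite addnS big_ord_recr /= IH HG ?addr0 // leq_addr.
Qed.

Section Final.
Variables (F : fieldType) (R : algType F) (M : zmodType) (act : M -> R -> M).
Hypothesis Hmod : right_module act.
Local Notation II := (II act).
Local Notation cong := (cong act).
Local Notation fs := (fscale act).

Lemma no_family : aleph0_injective act -> countable_dim act ->
  forall k : nat -> R, (forall n, ~ II (k n)) -> (forall a b, a <> b -> II (k a * k b)) ->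
  (forall a, cong (k a * k a) (k a)) -> False.
Proof.
move=> Hinj Hdim k knz korth kidem.
have [mm Hmm] : exists mm : nat -> M, forall n, act (mm n) (k n) <> 0.
  apply: (@cid_fun nat M (fun n m => act m (k n) <> 0) 0) => n.
  by apply: NNPP => H; apply: (knz n) => m; apply: NNPP => H'; apply: H; exists m.
pose u n := act (mm n) (k n).
have uk : forall i j, act (u i) (k j) = if i == j then u i else 0.
  move=> i j; rewrite /u -actM //; case: eqP => [<-|Hne]; last by apply: korth.
  have -> : k i * k i = (k i * k i - k i) + k i by rewrite subrK.
  by rewrite actDr // (kidem i) add0r.
have unz : forall i, u i <> 0 by move=> i; apply: Hmm.
pose vanish n x := forall j, (n <= j)%N -> act (u j) x = 0.
have van_le : forall n N x, (n <= N)%N -> vanish n x -> vanish N x.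
  by move=> n N x HnN Hv j Hj; apply: Hv; apply: leq_trans Hj.
pose T (S : nat -> bool) N x := \sum_(i < N) (if S i then act (u i) x else 0).
have T_ext : forall S n N x, vanish n x -> (n <= N)%N -> T S N x = T S n x.
  move=> S n N x Hv HnN; rewrite /T; apply: (sum_pad (G := fun i => if S i then act (u i) x else 0)) => // i Hi.
  by rewrite Hv //; case: (S i).
pose nx x := epsilon (inhabits 0%N) (fun n => vanish n x).
pose fS S x := T S (nx x) x.
have fS_eq : forall S N x, vanish N x -> fS S x = T S N x.
  move=> S N x Hv; have Hn : vanish (nx x) x := epsilon_spec (inhabits 0%N) (fun n => vanish n x) (ex_intro _ N Hv).
  rewrite /fS -(T_ext S (nx x) (maxn (nx x) N)) ?leq_maxl //.
  by rewrite (T_ext S N) // leq_maxr.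
pose K x := exists n (r : nat -> R), x = \sum_(i < n) k i * r i.
have K_van : forall x, K x -> exists n, vanish n x.
  move=> x [n [r ->]]; exists n => j Hj; rewrite act_sumr //; apply: big1 => i _.
  rewrite actM // uk; case: eqP => [Hji|_]; last by rewrite act0l.
  by move: (ltn_ord i); rewrite -Hji ltnNge Hj.
have Kk : forall j, K (k j).
  move=> j; exists j.+1, (fun i => if i == j then 1 else 0).
  rewrite big_ord_recr /= eqxx mulr1 big1 ?add0r // => i _.
  by rewrite (ltn_eqF (ltn_ord i)) mulr0.
have cgK : cg_right_ideal K by exists k.
have Hom : forall S, hom_on (fun x y : M => x + y) act (fun _ => True) K (fS S).
  move=> S; split => //.
  - move=> a b Ka Kb; have [na Ha] := K_van a Ka; have [nb Hb] := K_van b Kb.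
    have Ha' := van_le na (maxn na nb) a (leq_maxl _ _) Ha.
    have Hb' := van_le nb (maxn na nb) b (leq_maxr _ _) Hb.
    have Hab : vanish (maxn na nb) (a + b) by move=> j Hj; rewrite actDr // Ha' // Hb' // addr0.
    rewrite (fS_eq S _ _ Hab) (fS_eq S _ _ Ha') (fS_eq S _ _ Hb') /T -big_split /=.
    by apply: eq_bigr => i _; case: (S i); rewrite ?addr0 // actDr.
  - move=> a r Ka; have [na Ha] := K_van a Ka.
    have Har : vanish na (a * r) by move=> j Hj; rewrite actM // Ha // act0l.
    rewrite (fS_eq S _ _ Har) (fS_eq S _ _ Ha) /T act_suml //.
    by apply: eq_bigr => i _; case: (S i); rewrite ?act0l // actM.
have xS : forall S, exists x, forall j, act x (k j) = if S j then u j else 0.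
  move=> S; have [g [[_ _ Hg] Hgf]] := Hinj K (fS S) cgK (Hom S).
  exists (g 1) => j; rewrite -Hg // mul1r Hgf //.
  have Hv : vanish j.+1 (k j).
    by move=> i Hi; rewrite uk; case: eqP => // Hij; move: Hi; rewrite Hij ltnn.
  rewrite (fS_eq S _ _ Hv) /T big_ord_recr /= big1 ?add0r.
    by rewrite uk eqxx.
  by move=> i _; rewrite uk (ltn_eqF (ltn_ord i)); case: (S i).
have [e He] := span_all Hmod Hdim.
have diag : forall N, exists j, (j <= N)%N /\ ~ exists x, Dsp act e N x /\
    forall l, (l <= N)%N -> act x (k (N * N + l)) = if l == j then u (N * N + l) else 0.
  move=> N; apply: NNPP => Hc.
  have [v Hv] : exists v : nat -> M, forall j, (j <= N)%N -> Dsp act e N (v j) /\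
      forall l, (l <= N)%N -> act (v j) (k (N * N + l)) = if l == j then u (N * N + l) else 0.
    apply: (@cid_fun _ _ (fun j x => (j <= N)%N -> Dsp act e N x /\
      forall l, (l <= N)%N -> act x (k (N * N + l)) = if l == j then u (N * N + l) else 0) 0) => j.
    case: (boolP (j <= N)%N) => Hj; last by exists 0.
    apply: NNPP => Hn; apply: Hc; exists j; split => // -[x Hx]; apply: Hn; exists x => _; exact: Hx.
  have [a [[j0 Hj0] Hsum]] := dependence Hmod (fun j Hj => proj1 (Hv j Hj)).
  apply: (unz (N * N + j0)); apply: (fs_cancel Hmod Hj0).
  have := congr1 (fun x => act x (k (N * N + j0))) Hsum; rewrite /= act0l // act_suml // => <-.
  have hj : forall j : 'I_N.+1, (j <= N)%N by move=> j; rewrite -ltnS ltn_ord.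
  rewrite (bigD1 j0) //= fs_comm // (proj2 (Hv j0 (hj j0)) j0 (hj j0)) eqxx.
  rewrite big1 ?addr0 // => j Hj; rewrite fs_comm // (proj2 (Hv j (hj j)) j0 (hj j0)).
  case: eqP => [Heq|_]; last by rewrite fs0r.
  by move: Hj; rewrite (ord_inj Heq) eqxx.
have [jN HjN] := @cid_fun _ _ (fun N j => (j <= N)%N /\ ~ exists x, Dsp act e N x /\
    forall l, (l <= N)%N -> act x (k (N * N + l)) = if l == j then u (N * N + l) else 0) 0%N diag.
pose S i := [exists N : 'I_i.+1, i == (N * N + jN N)%N].
have S_char : forall N l, (l <= N)%N -> S (N * N + l)%N = (l == jN N).
  move=> N l HlN; apply/existsP/eqP.
    case=> N' /eqP H.
    have HN := sq_uniq HlN (proj1 (HjN N')) H; rewrite -HN in H.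
    by apply/eqP; rewrite -(eqn_add2l (N * N)) H.
  by move=> H; exists (Ordinal (sq_lt N l)); rewrite /= H.
have [x Hx] := xS S.
have [N HN] := He x.
apply: (proj2 (HjN N)); exists x; split => // l Hl.
by rewrite Hx S_char.
Qed.

End Final.

Lemma sum_pad_cut (R : nzRingType) (gen r : nat -> R) n N : (n <= N)%N ->
  \sum_(i < N) gen i * (if (i < n)%N then r i else 0) = \sum_(i < n) gen i * r i.
Proof.
move=> HnN; rewrite (sum_pad (G := fun i => gen i * (if (i < n)%N then r i else 0)) HnN).
  by apply: eq_bigr => i _; rewrite ltn_ord.
by move=> i Hi; rewrite ltnNge Hi mulr0.
Qed.

Lemma cg_ri (R : nzRingType) (J : R -> Prop) : cg_right_ideal J -> right_ideal J.
Proof.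
case=> gen HJ; split.
- by apply/HJ; exists 0%N, (fun _ => 0); rewrite big_ord0.
- move=> a b /HJ [n [r ->]] /HJ [m [s ->]]; apply/HJ.
  exists (maxn n m), (fun i => (if (i < n)%N then r i else 0) + (if (i < m)%N then s i else 0)).
  rewrite (eq_bigr (fun i : 'I_(maxn n m) => gen i * (if (i < n)%N then r i else 0) +
       gen i * (if (i < m)%N then s i else 0))); last by move=> i _; rewrite mulrDr.
  by rewrite big_split /= !sum_pad_cut ?leq_maxl ?leq_maxr.
- move=> a /HJ [n [r ->]]; apply/HJ; exists n, (fun i => - r i).
  by rewrite -sumrN; apply: eq_bigr => i _; rewrite mulrN.
- move=> a s /HJ [n [r ->]]; apply/HJ; exists n, (fun i => r i * s).
  by rewrite big_distrl; apply: eq_bigr => i _; rewrite mulrA.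
Qed.

Section Main.
Variables (F : fieldType) (R : algType F) (M : zmodType) (act : M -> R -> M).
Hypothesis Hmod : right_module act.
Hypothesis Hreg : von_neumann_regular R.
Local Notation II := (II act).

Lemma QA_principal : quotient_artinian (ann act) -> forall J : R -> Prop, right_ideal J -> principal act J.
Proof.
move=> HQA J HJ; apply: NNPP => Hnp.
have [D [[Dri DI Ddesc Dstr] _]] := chain_of_nonprincipal Hmod Hreg HJ Hnp.
have [n Hn] := HQA D Dri DI Ddesc.
have [x [Dx nDx]] := Dstr n; apply: nDx; apply/(Hn n.+1) => //.
Qed.

Lemma QA_sigma : quotient_artinian (ann act) -> sigma_aleph0_injective act.
Proof.
move=> HQA L J f cgJ [HS Hadd Hact].
have HJ := cg_ri cgJ.
have [e [Je He]] := QA_principal HQA HJ.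
exists (fun x => f (e * x)); split; first split.
- by move=> a _; apply: HS; apply: riM.
- by move=> a b _ _; rewrite mulrDr Hadd //; apply: riM.
- by move=> a r _; rewrite mulrA Hact //; apply: riM.
move=> a Ja.
set j := a - e * a.
have Jj : J j by apply: riB => //; apply: riM.
have [y Hy] := Hreg j.
have fj : f j = fun _ => 0.
  have -> : f j = f (j * (y * j)) by rewrite mulrA -Hy.
  rewrite Hact //; apply: functional_extensionality => l.
  by have := IMl Hmod y (He a Ja); rewrite -/j => H; apply: H.
have -> : a = e * a + j by rewrite /j addrC subrK.
rewrite Hadd; first last.
- exact: Jj.
- by apply: riM.
rewrite fj; apply: functional_extensionality => l; rewrite addr0.
by rewrite /j addrC subrK.
Qed.

Lemma sigma_aleph0 : sigma_aleph0_injective act -> aleph0_injective act.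
Proof.
move=> Hs J f cgJ [HS Hadd Hact].
have Hom : hom_on (fun x y : unit -> M => fun l => x l + y l)
   (fun (x : unit -> M) (r : R) => fun l => act (x l) r) (@fin_supp unit M) J (fun a => fun _ : unit => f a).
  split.
  - by move=> a _; exists [:: tt] => -[] _; left.
  - by move=> a b Ja Jb; rewrite Hadd.
  - by move=> a r Ja; rewrite Hact.
have [g [[_ Hgadd Hgact] Hgf]] := Hs unit J _ cgJ Hom.
exists (fun a => g a tt); split; first split => //.
- by move=> a b _ _; rewrite Hgadd.
- by move=> a r _; rewrite Hgact.
by move=> a Ja; rewrite Hgf.
Qed.

Lemma aleph0_QA : countable_dim act -> aleph0_injective act -> quotient_artinian (ann act).
Proof.
move=> Hdim Hinj; apply: NNPP => HnQA.
have [J HJ] : exists J : nat -> R -> Prop, [/\ (forall n, right_ideal (J n)),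
    (forall n x, ann act x -> J n x), (forall n x, J n.+1 x -> J n x) &
    ~ exists n, forall m, (n <= m)%N -> forall x, J m x <-> J n x].
  apply: NNPP => H; apply: HnQA => J Jri JI Jdesc; apply: NNPP => H'; apply: H.
  by exists J; split.
case: HJ => Jri JI Jdesc Jns.
have desc_le : forall n m x, (n <= m)%N -> J m x -> J n x.
  move=> n m x /subnKC <-; elim: (m - n)%N => [|d IH]; first by rewrite addn0.
  by rewrite addnS => H; apply: IH; apply: Jdesc.
have Hnext : forall n, exists m, (n <= m)%N /\ exists x, J n x /\ ~ J m x.
  move=> n; apply: NNPP => H; apply: Jns; exists n => m Hm x; split; first exact: desc_le.
  move=> Jnx; apply: NNPP => Jmx; apply: H; exists m; split => //; by exists x.
have [nx Hnx] := @cid_fun _ _ (fun n m => (n <= m)%N /\ exists x, J n x /\ ~ J m x) 0%N Hnext.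
pose sg t := iter t nx 0%N.
pose D t := J (sg t).
have HD : schain act D.
  split.
  - by move=> t; apply: Jri.
  - by move=> t x Ix; apply: JI.
  - by move=> t x; rewrite /D /sg iterS => H; apply: (desc_le _ _ _ (proj1 (Hnx _)) H).
  - by move=> t; rewrite /D /sg iterS; apply: (proj2 (Hnx _)).
case: (classic (forall t, principal act (D t))) => Hpr.
  have [k [k1 k2 k3]] := family_of_chain Hmod HD Hpr.
  exact: (no_family Hmod Hinj Hdim k1 k2 k3).
have [t Ht] := not_all_ex_not _ _ Hpr.
have [D' [HD' Hpr']] := chain_of_nonprincipal Hmod Hreg (Jri (sg t)) Ht.
have [k [k1 k2 k3]] := family_of_chain Hmod HD' Hpr'.
exact: (no_family Hmod Hinj Hdim k1 k2 k3).
Qed.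

End Main.

Theorem theorem3p5 (F : fieldType) (R : algType F)
  (M : zmodType) (act : M -> R -> M) :
  von_neumann_regular R ->
  right_module act ->
  countable_dim act ->
  ( (quotient_artinian (ann act) <-> sigma_aleph0_injective act) /\
    (sigma_aleph0_injective act <-> aleph0_injective act) ).
Proof.
move=> Hreg Hmod Hdim.
have h1 := QA_sigma Hmod Hreg.
have h2 := @sigma_aleph0 F R M act.
have h3 := aleph0_QA Hmod Hreg Hdim.
split; split => H; auto.
Qed.
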